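(* Let $(X,\mathcal F)$ be a measurable space in which every singleton $\{t\}$, $t\in X$, belongs to $\mathcal F$, and let $g,h\colon X\to[0,\infty)$ be measurable with $\inf_{x\in X} g(x)h(x)=0$. Then there is no functional $c\colon\mathcal M\to[0,\infty)$ such that for every $\mu\in\mathcal M$ and every measurable $f\colon X\to[0,\infty)$ with $\int_X f\,d\mu<\infty$, $$\int_X f\,d\mu\le c(\mu)\Big(\int_X g f^2\,d\mu\Big)^{1/4}\Big(\int_X h f^2\,d\mu\Big)^{1/4},$$ where all integrals are Choquet integrals.
   Context: $\mathcal M$ denotes the set of monotone measures on $(X,\mathcal F)$, i.e. maps $\mu\colon\mathcal F\to[0,\infty]$ with $\mu(\emptyset)=0$, $\mu(X)>0$ and $\mu(A)\le\mu(B)$ for $A\subset B$. The Choquet integral of a measurable $f\colon X\to[0,\infty)$ on $A\in\mathcal F$ is $\int_A f\,d\mu=\int_0^\infty\mu(A\cap\{f\ge t\})\,dt$ (improper Riemann integral). *)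

(* Defs.v *)
From Stdlib Require Import Reals Lra Classical ClassicalEpsilon.
Open Scope R_scope.

(* Extended non-negative reals [0, +oo]: finite values and +oo. *)
Inductive ereal : Type := EFin (r : R) | EInf.

Definition ele (a b : ereal) : Prop :=
  match a, b with
  | EFin x, EFin y => x <= y
  | _, EInf => True
  | EInf, EFin _ => False
  end.

Definition elt (a b : ereal) : Prop :=
  match a, b with
  | EFin x, EFin y => x < y
  | EFin _, EInf => True
  | EInf, _ => False
  end.

(* multiplication on [0,+oo] with the measure-theoretic convention 0 * oo = 0 *)
Definition emul (a b : ereal) : ereal :=
  match a, b with
  | EFin x, EFin y => EFin (x * y)
  | EFin x, EInf => if Req_EM_T x 0 then EFin 0 else EInf
  | EInf, EFin y => if Req_EM_T y 0 then EFin 0 else EInf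
  | EInf, EInf => EInf
  end.

Definition epow14 (a : ereal) : ereal :=
  match a with
  | EFin x => if Rle_dec x 0 then EFin 0 else EFin (Rpower x (1/4))
  | EInf => EInf
  end.

Record sigma_algebra (X : Type) (F : (X -> Prop) -> Prop) : Prop := {
  sa_empty : F (fun _ => False);
  sa_compl : forall A, F A -> F (fun x => ~ A x);
  sa_union : forall A : nat -> X -> Prop,
      (forall n, F (A n)) -> F (fun x => exists n, A n x)
}.

(* measurability of a real function f : X -> R w.r.t. F and the Borel sets
   (via the standard equivalent characterization by upper level sets) *)
Definition measurable_fun {X : Type} (F : (X -> Prop) -> Prop) (f : X -> R) : Prop :=
  forall t : R, F (fun x => t <= f x).

Record monotone_measure {X : Type} (F : (X -> Prop) -> Prop) : Type := {
  mm_fun :> (X -> Prop) -> ereal;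
  mm_nonneg : forall A, F A -> ele (EFin 0) (mm_fun A);
  mm_empty : mm_fun (fun _ => False) = EFin 0;
  mm_full_pos : elt (EFin 0) (mm_fun (fun _ => True));
  mm_mono : forall A B, F A -> F B -> (forall x, A x -> B x) ->
      ele (mm_fun A) (mm_fun B)
}.

Definition improper_RInt_0_inf (phi : R -> R) (v : R) : Prop :=
  forall eps, 0 < eps -> exists a0 B, 0 < a0 /\
    forall a b, 0 < a -> a <= a0 -> B <= b -> a <= b ->
      exists pr : Riemann_integrable phi a b, Rabs (RiemannInt pr - v) < eps.

Definition efin_part (a : ereal) : R :=
  match a with EFin x => x | EInf => 0 end.

(* Choquet integral  int_A f dmu = int_0^oo mu(A /\ {f >= t}) dt
   (improper Riemann integral, valued in [0,+oo]). *)
Definition choquet_fin {X : Type} {F : (X -> Prop) -> Prop}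
    (mu : monotone_measure F) (A : X -> Prop) (f : X -> R) (v : R) : Prop :=
  (forall t, 0 < t -> mu (fun x => A x /\ t <= f x) <> EInf) /\
  improper_RInt_0_inf (fun t => efin_part (mu (fun x => A x /\ t <= f x))) v.

Definition choquet {X : Type} {F : (X -> Prop) -> Prop}
    (mu : monotone_measure F) (A : X -> Prop) (f : X -> R) : ereal :=
  match excluded_middle_informative (exists v, choquet_fin mu A f v) with
  | left H => EFin (proj1_sig (constructive_indefinite_description _ H))
  | right _ => EInf
  end.

(* Main.v *)
Require Import Defs.
From Stdlib Require Import Reals Lra.
From Coquelicot Require Import Coquelicot.
From Stdlib Require Import FunctionalExtensionality PropExtensionality Classical ClassicalEpsilon.
Open Scope R_scope.

Lemma cst_RInt (a b v : R) : is_RInt (fun _ => v) a b ((b - a) * v).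
Proof. exact (is_RInt_const (V:=R_NormedModule) a b v). Qed.

Lemma step_is_RInt (al a b : R) (phi : R -> R) :
  0 <= al -> 0 < a -> a <= b ->
  (forall s, 0 < s -> phi s = if Rle_dec s al then 1 else 0) ->
  is_RInt phi a b (if Rle_dec a al then Rmin b al - a else 0).
Proof.
  intros Hal Ha Hab Hphi.
  destruct (Rle_dec a al) as [Hle|Hlt].
  - destruct (Rle_dec b al) as [Hb|Hb].
    + rewrite Rmin_left by lra.
      apply (is_RInt_ext (fun _ => 1)).
      { intros x Hx. rewrite Rmin_left in Hx by lra. rewrite Rmax_right in Hx by lra.
        rewrite Hphi by lra. destruct (Rle_dec x al); lra. }
      replace (b - a) with ((b - a) * 1) by ring. apply cst_RInt.
    + rewrite Rmin_right by lra.
      replace (al - a) with (plus (al - a) 0) by (unfold plus; simpl; ring).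
      apply (is_RInt_Chasles (V:=R_NormedModule)) with al.
      * apply (is_RInt_ext (fun _ => 1)).
        { intros x Hx. rewrite Rmin_left in Hx by lra. rewrite Rmax_right in Hx by lra.
          rewrite Hphi by lra. destruct (Rle_dec x al); lra. }
        replace (al - a) with ((al - a) * 1) by ring. apply cst_RInt.
      * apply (is_RInt_ext (fun _ => 0)).
        { intros x Hx. rewrite Rmin_left in Hx by lra. rewrite Rmax_right in Hx by lra.
          rewrite Hphi by lra. destruct (Rle_dec x al); lra. }
        pose proof (cst_RInt al b 0) as H0; rewrite Rmult_0_r in H0; exact H0.
  - apply (is_RInt_ext (fun _ => 0)).
    { intros x Hx. rewrite Rmin_left in Hx by lra. rewrite Rmax_right in Hx by lra.
      rewrite Hphi by lra. destruct (Rle_dec x al); lra. }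
    pose proof (cst_RInt a b 0) as H0; rewrite Rmult_0_r in H0; exact H0.
Qed.

Lemma step_improper (al : R) (phi : R -> R) :
  0 <= al ->
  (forall s, 0 < s -> phi s = if Rle_dec s al then 1 else 0) ->
  improper_RInt_0_inf phi al.
Proof.
  intros Hal Hphi eps Heps.
  exists (eps / 2), al. split; [lra|].
  intros a b Ha Ha0 Hb Hab.
  pose proof (step_is_RInt al a b phi Hal Ha Hab Hphi) as H.
  assert (Hex : ex_RInt phi a b) by (eexists; exact H).
  exists (ex_RInt_Reals_0 _ _ _ Hex).
  rewrite <- RInt_Reals. rewrite (is_RInt_unique _ _ _ _ H).
  destruct (Rle_dec a al).
  - rewrite Rmin_right by lra. unfold Rabs; destruct Rcase_abs; lra.
  - unfold Rabs; destruct Rcase_abs; lra.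
Qed.

Lemma improper_unique (phi : R -> R) (v w : R) :
  improper_RInt_0_inf phi v -> improper_RInt_0_inf phi w -> v = w.
Proof.
  intros Hv Hw.
  destruct (Req_dec v w) as [|Hne]; [assumption|exfalso].
  set (eps := Rabs (v - w) / 3).
  assert (Hpos : 0 < eps) by (unfold eps; pose proof (Rabs_pos_lt (v - w)); assert (v - w <> 0) by lra; specialize (H H0); lra).
  destruct (Hv eps Hpos) as [a1 [B1 [Ha1 H1]]].
  destruct (Hw eps Hpos) as [a2 [B2 [Ha2 H2]]].
  set (a := Rmin a1 a2). set (b := Rmax (Rmax B1 B2) a).
  assert (0 < a) by (unfold a; apply Rmin_pos; lra).
  assert (a <= a1) by apply Rmin_l. assert (a <= a2) by apply Rmin_r.
  assert (B1 <= b) by (unfold b; eapply Rle_trans; [apply Rmax_l|apply Rmax_l]).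
  assert (B2 <= b) by (unfold b; eapply Rle_trans; [apply Rmax_r|apply Rmax_l]).
  assert (a <= b) by (unfold b; apply Rmax_r).
  destruct (H1 a b) as [p1 E1]; try assumption.
  destruct (H2 a b) as [p2 E2]; try assumption.
  rewrite (RiemannInt_P5 p1 p2) in E1.
  assert (Rabs (v - w) <= Rabs (RiemannInt p2 - v) + Rabs (RiemannInt p2 - w)).
  { replace (v - w) with (-(RiemannInt p2 - v) + (RiemannInt p2 - w)) by ring.
    eapply Rle_trans; [apply Rabs_triang|]. rewrite Rabs_Ropp. lra. }
  unfold eps in *. lra.
Qed.

Lemma choquet_eq {X : Type} {F : (X -> Prop) -> Prop} (mu : monotone_measure F)
  (A : X -> Prop) (f : X -> R) (v : R) :
  choquet_fin mu A f v -> choquet mu A f = EFin v.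
Proof.
  intros H. unfold choquet.
  destruct excluded_middle_informative as [e|n].
  - destruct constructive_indefinite_description as [w Hw]; simpl.
    f_equal. apply (improper_unique _ _ _ (proj2 Hw) (proj2 H)).
  - exfalso; apply n; exists v; exact H.
Qed.

Section Smu.
Context {X : Type} (F : (X -> Prop) -> Prop) (x0 : X).

Definition smu (A : X -> Prop) : ereal :=
  if excluded_middle_informative (exists x, A x) then EFin 1 else EFin 0.

Definition smu_mm : monotone_measure F.
Proof.
  refine {| mm_fun := smu |}.
  - intros A _. unfold smu; destruct excluded_middle_informative; simpl; lra.
  - unfold smu; destruct excluded_middle_informative as [[x []]|]; reflexivity.
  - unfold smu; destruct excluded_middle_informative as [|nn]; simpl; [lra|].
    exfalso; apply nn; exists x0; exact I.
  - intros A B _ _ HAB. unfold smu.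
    destruct (excluded_middle_informative (exists x, A x)) as [[x Hx]|n1];
    destruct (excluded_middle_informative (exists x, B x)) as [|n2]; simpl; try lra.
    exfalso; apply n2; exists x; auto.
Defined.

Lemma choquet_smu (G : X -> R) (al : R) : 0 <= al ->
  (forall s, 0 < s -> ((exists x, s <= G x) <-> s <= al)) ->
  choquet smu_mm (fun _ => True) G = EFin al.
Proof.
  intros Hal HG. apply choquet_eq. split.
  - intros t _. simpl. unfold smu. destruct excluded_middle_informative; discriminate.
  - apply step_improper; [assumption|].
    intros s Hs. simpl. unfold smu.
    destruct excluded_middle_informative as [[x [_ Hx]]|n];
    destruct (Rle_dec s al) as [r|r]; simpl; try reflexivity.
    + exfalso; apply r, (HG s Hs); eauto.
    + exfalso; apply n. destruct (proj2 (HG s Hs) r) as [x Hx]. exists x; auto.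
Qed.
End Smu.

Lemma set_eq {X : Type} (A B : X -> Prop) : (forall x, A x <-> B x) -> A = B.
Proof. intros H. apply functional_extensionality; intros x. apply propositional_extensionality; auto. Qed.

Lemma pow14_4 (a : R) : 0 < a -> (Rpower a (1/4)) ^ 4 = a.
Proof.
  intros Ha. rewrite <- Rpower_pow by (unfold Rpower; apply exp_pos).
  rewrite Rpower_mult. replace (1/4 * INR 4) with 1 by (simpl; field).
  apply Rpower_1; assumption.
Qed.

Theorem mainTheorem4 (X : Type) (F : (X -> Prop) -> Prop)
  (HF : sigma_algebra X F)
  (Hsing : forall t : X, F (fun x => x = t))
  (g h : X -> R)
  (Hg0 : forall x, 0 <= g x) (Hh0 : forall x, 0 <= h x)
  (Hgm : measurable_fun F g) (Hhm : measurable_fun F h)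
  (Hinf : forall eps, 0 < eps -> exists x, g x * h x < eps) :
  ~ exists c : monotone_measure F -> R,
      (forall mu, 0 <= c mu) /\
      forall (mu : monotone_measure F) (f : X -> R),
        (forall x, 0 <= f x) -> measurable_fun F f ->
        elt (choquet mu (fun _ => True) f) EInf ->
        ele (choquet mu (fun _ => True) f)
            (emul (emul (EFin (c mu))
                        (epow14 (choquet mu (fun _ => True) (fun x => g x * (f x)^2))))
                  (epow14 (choquet mu (fun _ => True) (fun x => h x * (f x)^2)))).
Proof.
  intros [c [Hc H]].
  destruct (Hinf 1 ltac:(lra)) as [x0 _].
  set (mu := smu_mm F x0).
  set (cc := c mu).
  assert (Hcc : 0 <= cc) by apply Hc.
  assert (Hepos : 0 < / (cc ^ 4 + 1)).
  { apply Rinv_0_lt_compat. pose proof (pow_le cc 4 Hcc). lra. }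
  destruct (Hinf _ Hepos) as [t0 Ht0].
  set (f := fun x : X => if excluded_middle_informative (x = t0) then 1 else 0).
  assert (Hf0 : forall x, 0 <= f x) by (intros x; unfold f; destruct excluded_middle_informative; lra).
  assert (Hf1 : forall x, f x <= 1) by (intros x; unfold f; destruct excluded_middle_informative; lra).
  assert (Hft : f t0 = 1) by (unfold f; destruct excluded_middle_informative; congruence).
  assert (Hfo : forall x, x <> t0 -> f x = 0) by (intros x Hx; unfold f; destruct excluded_middle_informative; congruence).
  assert (Hfm : measurable_fun F f).
  { intros t.
    destruct (Rle_dec t 0) as [Ht|Ht].
    - replace (fun x => t <= f x) with (fun x : X => ~ False).
      + apply sa_compl, sa_empty; assumption.
      + apply set_eq; intros x; split; auto. intros _. pose proof (Hf0 x); lra.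
    - destruct (Rle_dec t 1) as [Ht1|Ht1].
      + replace (fun x => t <= f x) with (fun x : X => x = t0). apply Hsing.
        apply set_eq; intros x; split.
        * intros ->. rewrite Hft; lra.
        * intros Hx. destruct (classic (x = t0)) as [|n]; auto. rewrite Hfo in Hx; auto. lra.
      + replace (fun x => t <= f x) with (fun x : X => False).
        * apply sa_empty; assumption.
        * apply set_eq; intros x; split; [tauto|]. intros Hx. pose proof (Hf1 x); lra. }
  assert (Hgen : forall (k : X -> R), (forall x, 0 <= k x) ->
            choquet mu (fun _ => True) (fun x => k x * (f x)^2) = EFin (k t0)).
  { intros k Hk. apply choquet_smu; [apply Hk|].
    intros s Hs; split.
    - intros [x Hx]. destruct (classic (x = t0)) as [->|n].
      + rewrite Hft in Hx. lra.
      + rewrite Hfo in Hx by assumption. lra.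
    - intros Hs'. exists t0. rewrite Hft. lra. }
  assert (Hf : choquet mu (fun _ => True) f = EFin 1).
  { apply choquet_smu; [lra|]. intros s Hs; split.
    - intros [x Hx]. pose proof (Hf1 x); lra.
    - intros Hs'. exists t0. rewrite Hft. lra. }
  specialize (H mu f Hf0 Hfm).
  rewrite Hf, (Hgen g Hg0), (Hgen h Hh0) in H.
  specialize (H I). fold cc in H. simpl in H.
  unfold epow14 in H.
  destruct (Rle_dec (g t0) 0) as [Hga|Hga];
  [destruct (Req_EM_T cc 0); simpl in H;
   destruct (Rle_dec (h t0) 0); simpl in H; lra|].
  destruct (Rle_dec (h t0) 0) as [Hha|Hha]; simpl in H; [lra|].
  set (u := Rpower (g t0) (1/4)) in H.
  set (v := Rpower (h t0) (1/4)) in H.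
  assert (Hu : 0 <= u) by (unfold u, Rpower; left; apply exp_pos).
  assert (Hv : 0 <= v) by (unfold v, Rpower; left; apply exp_pos).
  assert (Hu4 : u ^ 4 = g t0) by (apply pow14_4; lra).
  assert (Hv4 : v ^ 4 = h t0) by (apply pow14_4; lra).
  set (w := cc * u * v) in H.
  assert (Hw1 : 1 <= w) by exact H.
  assert (Hw2 : 1 <= w * w) by nra.
  assert (Hw4 : 1 <= w ^ 4) by (replace (w ^ 4) with ((w * w) * (w * w)) by ring; nra).
  assert (Hw : w ^ 4 = cc ^ 4 * (g t0 * h t0)) by (unfold w; rewrite <- Hu4, <- Hv4; ring).
  assert (Hlt : cc ^ 4 * (g t0 * h t0) <= cc ^ 4 * / (cc ^ 4 + 1)).
  { apply Rmult_le_compat_l; [apply pow_le; lra | lra]. }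
  assert (Hfin : cc ^ 4 * / (cc ^ 4 + 1) < 1).
  { pose proof (pow_le cc 4 Hcc).
    apply (Rmult_lt_reg_r (cc ^ 4 + 1)); [lra|].
    rewrite Rmult_assoc, Rinv_l by lra. lra. }
  lra.
Qed.
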